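(* Let $\gamma:\mathbb{R}\to\mathbb{R}^3$ be a $C^\infty$ $l$-periodic curve parametrized by arc length, $\xi$ a $C^\infty$ $l$-odd-periodic unit vector field along $\gamma$ with $\gamma'(s),\xi(s)$ linearly independent for all $s$ and $\det(\gamma',\xi,\xi')\equiv 0$, and let $F(s,u)=\gamma(s)+u\xi(s)$, $(s,u)\in\mathbb{R}^2$, regarded on $M=\mathbb{R}^2/\!\sim$. Let $\nu(s)=\gamma'(s)\times\xi(s)/|\gamma'(s)\times\xi(s)|$. Then: (i) every singular point of $F$ is non-degenerate, i.e. $d\lambda\neq 0$ there, where $\lambda=\det(F_s,F_u,\nu)$; (ii) the singular set of $F$ is $$S(F)=\left\{(s,u)\in M : u=-\frac{|\gamma'(s)\times\xi(s)|^2}{\gamma'(s)\cdot\xi'(s)},\ \xi'(s)\neq 0\right\};$$ (iii) along the singular set, a null vector field of $F$ (a nonzero vector field $\eta$ with $dF(\eta)=0$) is given by $\dfrac{\partial}{\partial s}-(\gamma'\cdot\xi)\dfrac{\partial}{\partial u}$.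
   Context: $l$-periodic means $\gamma(s+l)=\gamma(s)$; $l$-odd-periodic means $\xi(s+l)=-\xi(s)$; $\sim$ identifies $(s,u)$ with $(s+l,-u)$. A singular point is a point where the Jacobian of $F$ has rank $<2$. The condition $\det(\gamma',\xi,\xi')\equiv 0$ means $F$ is developable (flat). *)

(* Defs.v *)
From Stdlib Require Import Reals.
From Coquelicot Require Import Coquelicot.
Open Scope R_scope.

Definition vec := (R * R * R)%type.
Definition c1 (x : vec) : R := fst (fst x).
Definition c2 (x : vec) : R := snd (fst x).
Definition c3 (x : vec) : R := snd x.
Definition mkvec (a b c : R) : vec := (a, b, c).
Definition vec0 : vec := mkvec 0 0 0.
Definition vadd (x y : vec) : vec := mkvec (c1 x + c1 y) (c2 x + c2 y) (c3 x + c3 y).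
Definition vscale (k : R) (x : vec) : vec := mkvec (k * c1 x) (k * c2 x) (k * c3 x).
Definition dot (x y : vec) : R := c1 x * c1 y + c2 x * c2 y + c3 x * c3 y.
Definition cross (x y : vec) : vec :=
  mkvec (c2 x * c3 y - c3 x * c2 y) (c3 x * c1 y - c1 x * c3 y) (c1 x * c2 y - c2 x * c1 y).
Definition vnorm (x : vec) : R := sqrt (dot x x).
Definition det3 (a b c : vec) : R := dot (cross a b) c.

Definition vderive (f : R -> vec) (s : R) : vec :=
  mkvec (Derive (fun t => c1 (f t)) s) (Derive (fun t => c2 (f t)) s)
        (Derive (fun t => c3 (f t)) s).

Definition smooth_fun (f : R -> R) : Prop := forall (n : nat) (x : R), ex_derive (Derive_n f n) x.
Definition smooth_curve (f : R -> vec) : Prop :=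
  smooth_fun (fun t => c1 (f t)) /\ smooth_fun (fun t => c2 (f t)) /\ smooth_fun (fun t => c3 (f t)).

Definition lin_indep2 (a b : vec) : Prop :=
  forall x y : R, vadd (vscale x a) (vscale y b) = vec0 -> x = 0 /\ y = 0.

Definition Fsurf (gamma xi : R -> vec) (s u : R) : vec := vadd (gamma s) (vscale u (xi s)).
Definition F_s (gamma xi : R -> vec) (s u : R) : vec := vderive (fun t => Fsurf gamma xi t u) s.
Definition F_u (gamma xi : R -> vec) (s u : R) : vec := vderive (fun v => Fsurf gamma xi s v) u.

Definition singular_point (gamma xi : R -> vec) (s u : R) : Prop :=
  ~ lin_indep2 (F_s gamma xi s u) (F_u gamma xi s u).

Definition nu (gamma xi : R -> vec) (s : R) : vec :=
  vscale (/ vnorm (cross (vderive gamma s) (xi s))) (cross (vderive gamma s) (xi s)).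
Definition lambda (gamma xi : R -> vec) (s u : R) : R :=
  det3 (F_s gamma xi s u) (F_u gamma xi s u) (nu gamma xi s).

(* Main.v *)
Require Import Defs.
From Stdlib Require Import Reals Lra Psatz Classical.
From Coquelicot Require Import Coquelicot.
Open Scope R_scope.
Lemma ex0 (f : R -> R) : smooth_fun f -> forall x, ex_derive f x.
Proof. intros H x. exact (H 0%nat x). Qed.

Lemma Dlin (f h : R -> R) u s : ex_derive f s -> ex_derive h s ->
  Derive (fun t => f t + u * h t) s = Derive f s + u * Derive h s.
Proof. intros. rewrite Derive_plus; auto. rewrite Derive_scal. auto.
  apply ex_derive_scal; auto. Qed.

Lemma Fs_eq gamma xi s v : smooth_curve gamma -> smooth_curve xi ->
  F_s gamma xi s v = vadd (vderive gamma s) (vscale v (vderive xi s)).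
Proof.
  intros [a1 [a2 a3]] [b1 [b2 b3]].
  unfold F_s, vderive, Fsurf, vadd, vscale, mkvec, Defs.c1, Defs.c2, Defs.c3; simpl.
  f_equal; [f_equal|]; apply Dlin; apply ex0; auto.
Qed.

Lemma Fu_eq gamma xi s v : F_u gamma xi s v = xi s.
Proof.
  unfold F_u, vderive, Fsurf, vadd, vscale, mkvec, Defs.c1, Defs.c2, Defs.c3; simpl.
  destruct (xi s) as [[x1 x2] x3]; destruct (gamma s) as [[g1 g2] g3]; simpl.
  f_equal; [f_equal|]; apply is_derive_unique; auto_derive; auto; ring.
Qed.

Lemma dot1 (v : vec) : vnorm v = 1 -> dot v v = 1.
Proof.
  unfold vnorm; intros H. assert (0 <= dot v v).
  { destruct v as [[a b] c]; unfold dot, Defs.c1, Defs.c2, Defs.c3; simpl; nra. }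
  rewrite <- (sqrt_sqrt (dot v v)); auto. rewrite H; ring.
Qed.

Lemma orth xi s : smooth_curve xi -> (forall t, vnorm (xi t) = 1) ->
  dot (xi s) (vderive xi s) = 0.
Proof.
  intros [a1 [a2 a3]] Hn.
  assert (Hc : Derive (fun t => dot (xi t) (xi t)) s = 0).
  { rewrite (Derive_ext _ (fun _ => 1)). apply Derive_const. intro t; apply dot1; auto. }
  pose (f1 := fun t => Defs.c1 (xi t)); pose (f2 := fun t => c2 (xi t)); pose (f3 := fun t => c3 (xi t)).
  assert (E : Derive (fun t => dot (xi t) (xi t)) s =
    2 * (f1 s * Derive f1 s + f2 s * Derive f2 s + f3 s * Derive f3 s)).
  { apply is_derive_unique.
    change (fun t => dot (xi t) (xi t)) with (fun t => f1 t * f1 t + f2 t * f2 t + f3 t * f3 t).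
    auto_derive. repeat split; apply ex0; auto. change (fun x => f1 x) with f1; change (fun x => f2 x) with f2; change (fun x => f3 x) with f3; ring. }
  rewrite E in Hc. unfold f1, f2, f3 in Hc.
  unfold dot, vderive, mkvec, Defs.c1, Defs.c2, Defs.c3 in *; simpl in *. lra.
Qed.
Lemma vec_eq0 (a b c : R) : a = 0 -> b = 0 -> c = 0 -> mkvec a b c = vec0.
Proof. intros -> -> ->. reflexivity. Qed.

Lemma not_indep (a b : vec) : ~ lin_indep2 a b ->
  exists p q, vadd (vscale p a) (vscale q b) = vec0 /\ ~ (p = 0 /\ q = 0).
Proof.
  intros H. apply NNPP. intro H1. apply H. intros p q E.
  apply NNPP. intro H2. apply H1. exists p, q. auto.
Qed.

Lemma alg (g x d : vec) (u : R) :
  dot g g = 1 -> dot x x = 1 -> dot x d = 0 -> det3 g x d = 0 -> lin_indep2 g x ->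
  0 < vnorm (cross g x) /\
  ((~ lin_indep2 (vadd g (vscale u d)) x) <->
     (u = - (vnorm (cross g x)) ^ 2 / dot g d /\ d <> vec0)) /\
  (~ lin_indep2 (vadd g (vscale u d)) x ->
     vadd (vscale 1 (vadd g (vscale u d))) (vscale (- dot g x) x) = vec0 /\
     dot (cross d x) (cross g x) <> 0).
Proof.
  destruct g as [[g1 g2] g3]; destruct x as [[x1 x2] x3]; destruct d as [[d1 d2] d3].
  unfold det3, dot, cross, vnorm, lin_indep2, vadd, vscale, mkvec, vec0, Defs.c1, Defs.c2, Defs.c3; simpl.
  intros G N O D I. unfold mkvec in *.
  set (c := g1*x1+g2*x2+g3*x3).
  set (W := 1 - c*c).
  set (p := g1*d1+g2*d2+g3*d3).
  assert (HW : 0 < W).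
  { destruct (Rlt_or_le 0 W) as [h|h]; auto. exfalso.
    assert (S : (c*g1 - x1)*(c*g1 - x1) + (c*g2-x2)*(c*g2-x2) + (c*g3-x3)*(c*g3-x3) = W).
    { transitivity (c*c*(g1*g1+g2*g2+g3*g3) - 2*c*c + (x1*x1+x2*x2+x3*x3)); [unfold c; ring|].
      rewrite G, N. unfold W. ring. }
    pose proof (Rle_0_sqr (c*g1-x1)); pose proof (Rle_0_sqr (c*g2-x2)); pose proof (Rle_0_sqr (c*g3-x3)).
    unfold Rsqr in *.
    assert (h1: c*g1-x1 = 0) by (apply Rsqr_0_uniq; unfold Rsqr; lra).
    assert (h2: c*g2-x2 = 0) by (apply Rsqr_0_uniq; unfold Rsqr; lra).
    assert (h3: c*g3-x3 = 0) by (apply Rsqr_0_uniq; unfold Rsqr; lra).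
    destruct (I c (-1)) as [_ F].
    - f_equal; [f_equal|]; lra.
    - lra. }
  assert (Dec : forall k, k = 1 \/ k = 2 \/ k = 3 -> True) by auto.
  assert (E1 : W*d1 = p*g1 - p*c*x1).
  { assert (Id : ((g1*g1+g2*g2+g3*g3)*(x1*x1+x2*x2+x3*x3) - c*c)*d1 =
       ((g2*x3-g3*x2)*d1 + (g3*x1-g1*x3)*d2 + (g1*x2-g2*x1)*d3)*(g2*x3-g3*x2)
       + (p*(x1*x1+x2*x2+x3*x3) - (x1*d1+x2*d2+x3*d3)*c)*g1
       + ((x1*d1+x2*d2+x3*d3)*(g1*g1+g2*g2+g3*g3) - p*c)*x1) by (unfold c, p; ring).
    rewrite G, N, O, D in Id. unfold W. lra. }
  assert (E2 : W*d2 = p*g2 - p*c*x2).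
  { assert (Id : ((g1*g1+g2*g2+g3*g3)*(x1*x1+x2*x2+x3*x3) - c*c)*d2 =
       ((g2*x3-g3*x2)*d1 + (g3*x1-g1*x3)*d2 + (g1*x2-g2*x1)*d3)*(g3*x1-g1*x3)
       + (p*(x1*x1+x2*x2+x3*x3) - (x1*d1+x2*d2+x3*d3)*c)*g2
       + ((x1*d1+x2*d2+x3*d3)*(g1*g1+g2*g2+g3*g3) - p*c)*x2) by (unfold c, p; ring).
    rewrite G, N, O, D in Id. unfold W. lra. }
  assert (E3 : W*d3 = p*g3 - p*c*x3).
  { assert (Id : ((g1*g1+g2*g2+g3*g3)*(x1*x1+x2*x2+x3*x3) - c*c)*d3 =
       ((g2*x3-g3*x2)*d1 + (g3*x1-g1*x3)*d2 + (g1*x2-g2*x1)*d3)*(g1*x2-g2*x1)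
       + (p*(x1*x1+x2*x2+x3*x3) - (x1*d1+x2*d2+x3*d3)*c)*g3
       + ((x1*d1+x2*d2+x3*d3)*(g1*g1+g2*g2+g3*g3) - p*c)*x3) by (unfold c, p; ring).
    rewrite G, N, O, D in Id. unfold W. lra. }
  assert (NN : (g2*x3-g3*x2)*(g2*x3-g3*x2) + (g3*x1-g1*x3)*(g3*x1-g1*x3)
              + (g1*x2-g2*x1)*(g1*x2-g2*x1) = W).
  { unfold W. replace (c*c) with ((g1*g1+g2*g2+g3*g3)*(x1*x1+x2*x2+x3*x3) - 
      ((g2*x3-g3*x2)*(g2*x3-g3*x2) + (g3*x1-g1*x3)*(g3*x1-g1*x3)
              + (g1*x2-g2*x1)*(g1*x2-g2*x1))) by (unfold c; ring).
    rewrite G, N. ring. }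
  assert (Sq : sqrt ((g2*x3-g3*x2)*(g2*x3-g3*x2) + (g3*x1-g1*x3)*(g3*x1-g1*x3)
              + (g1*x2-g2*x1)*(g1*x2-g2*x1)) * (sqrt ((g2*x3-g3*x2)*(g2*x3-g3*x2) + (g3*x1-g1*x3)*(g3*x1-g1*x3)
              + (g1*x2-g2*x1)*(g1*x2-g2*x1)) * 1) = W).
  { rewrite NN. rewrite Rmult_1_r. apply sqrt_sqrt. lra. }
  unfold dot, Defs.c1, Defs.c2, Defs.c3 in *; simpl. fold p. split. { unfold vnorm, dot, Defs.c1, Defs.c2, Defs.c3; simpl; rewrite NN; apply sqrt_lt_R0; lra. } rewrite Sq.
  assert (Sing : ~ (forall a b : R,
      (a * (g1 + u * d1) + b * x1, a * (g2 + u * d2) + b * x2, a * (g3 + u * d3) + b * x3) =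
      (0, 0, 0) -> a = 0 /\ b = 0) <-> W + u*p = 0).
  { split.
    - intro H. apply NNPP. intro Hne. apply H. intros a b E. injection E as e1 e2 e3.
      destruct (I (a*(W+u*p)) (b*W - a*u*p*c)) as [i1 i2].
      + f_equal; [f_equal|].
        * apply (Rmult_eq_reg_l 1); [|lra]. 
          transitivity (W*(a * (g1 + u * d1) + b * x1) - a*u*(W*d1 - (p*g1-p*c*x1))); [ring|].
          rewrite e1, E1. ring.
        * transitivity (W*(a * (g2 + u * d2) + b * x2) - a*u*(W*d2 - (p*g2-p*c*x2))); [ring|].
          rewrite e2, E2. ring.
        * transitivity (W*(a * (g3 + u * d3) + b * x3) - a*u*(W*d3 - (p*g3-p*c*x3))); [ring|].
          rewrite e3, E3. ring.
      + assert (a = 0). { destruct (Rmult_integral _ _ i1); auto. lra. }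
        subst a. split; auto. nra.
    - intros H0 H. destruct (H W (u*p*c)) as [h _]; [|lra].
      f_equal; [f_equal|].
      + transitivity ((W + u*p)*g1 + u*(W*d1 - (p*g1-p*c*x1))); [ring|]. rewrite H0, E1. ring.
      + transitivity ((W + u*p)*g2 + u*(W*d2 - (p*g2-p*c*x2))); [ring|]. rewrite H0, E2. ring.
      + transitivity ((W + u*p)*g3 + u*(W*d3 - (p*g3-p*c*x3))); [ring|]. rewrite H0, E3. ring. }
  rewrite Sing. split.
  - split.
    + intro H0. assert (p <> 0) by (intro; nra).
      split.
      * field_simplify; auto. apply (Rmult_eq_reg_r p); auto. field_simplify; auto. lra.
      * intro E; injection E as e1 e2 e3. apply H. unfold p; rewrite e1,e2,e3; ring.
    + intros [Hu Hd]. assert (p <> 0).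
      { intro P0. apply Hd. rewrite P0 in E1, E2, E3.
        f_equal; [f_equal|]; apply (Rmult_eq_reg_l W); lra. }
      rewrite Hu. field. auto.
  - intro H0. split.
    + f_equal; [f_equal|]; apply (Rmult_eq_reg_l W); try lra.
      * transitivity ((W + u*p)*g1 + u*(W*d1 - (p*g1-p*c*x1)) - (W+u*p)*c*x1); [unfold c; ring|]. rewrite H0, E1. ring.
      * transitivity ((W + u*p)*g2 + u*(W*d2 - (p*g2-p*c*x2)) - (W+u*p)*c*x2); [unfold c; ring|]. rewrite H0, E2. ring.
      * transitivity ((W + u*p)*g3 + u*(W*d3 - (p*g3-p*c*x3)) - (W+u*p)*c*x3); [unfold c; ring|]. rewrite H0, E3. ring.
    + assert (p <> 0) by (intro; nra).
      intro Z.
      assert (K : W * ((d2 * x3 - d3 * x2) * (g2 * x3 - g3 * x2) + (d3 * x1 - d1 * x3) * (g3 * x1 - g1 * x3) +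
         (d1 * x2 - d2 * x1) * (g1 * x2 - g2 * x1)) = p * W).
      { rewrite <- NN at 2.
        transitivity (((W*d2) * x3 - (W*d3) * x2) * (g2 * x3 - g3 * x2) + ((W*d3) * x1 - (W*d1) * x3) * (g3 * x1 - g1 * x3) +
         ((W*d1) * x2 - (W*d2) * x1) * (g1 * x2 - g2 * x1)); [ring|].
        rewrite E1, E2, E3. ring. }
      rewrite Z in K. nra.
Qed.

Lemma lam_der gamma xi s u : smooth_curve gamma -> smooth_curve xi ->
  Derive (fun v => lambda gamma xi s v) u =
  / vnorm (cross (vderive gamma s) (xi s)) *
  dot (cross (vderive xi s) (xi s)) (cross (vderive gamma s) (xi s)).
Proof.
  intros Hg Hx.
  rewrite (Derive_ext _ (fun v => det3 (vadd (vderive gamma s) (vscale v (vderive xi s))) (xi s) (nu gamma xi s))).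
  2: intro v; unfold lambda; rewrite Fs_eq, Fu_eq; auto.
  unfold nu. generalize (vderive gamma s) (vderive xi s) (xi s).
  intros g d x. set (k := / vnorm _).
  destruct g as [[g1 g2] g3]; destruct x as [[x1 x2] x3]; destruct d as [[d1 d2] d3].
  unfold det3, dot, cross, vadd, vscale, mkvec, Defs.c1, Defs.c2, Defs.c3; simpl.
  apply is_derive_unique. auto_derive. auto. ring.
Qed.

Theorem lemma2p6 (gamma xi : R -> vec) (l : R) :
  0 < l ->
  smooth_curve gamma -> smooth_curve xi ->
  (forall s, gamma (s + l) = gamma s) ->
  (forall s, xi (s + l) = vscale (-1) (xi s)) ->
  (forall s, vnorm (vderive gamma s) = 1) ->
  (forall s, vnorm (xi s) = 1) ->
  (forall s, lin_indep2 (vderive gamma s) (xi s)) ->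
  (forall s, det3 (vderive gamma s) (xi s) (vderive xi s) = 0) ->
  (* (i) non-degeneracy: d lambda <> 0 at singular points *)
  (forall s u, singular_point gamma xi s u ->
     (Derive (fun t => lambda gamma xi t u) s, Derive (fun v => lambda gamma xi s v) u)
       <> (0, 0)) /\
  (* (ii) the singular set *)
  (forall s u, singular_point gamma xi s u <->
     (u = - (vnorm (cross (vderive gamma s) (xi s))) ^ 2
            / dot (vderive gamma s) (vderive xi s)
      /\ vderive xi s <> vec0)) /\
  (* (iii) null vector field d/ds - (gamma'.xi) d/du along the singular set *)
  (forall s u, singular_point gamma xi s u ->
     (1, - dot (vderive gamma s) (xi s)) <> (0, 0) /\
     vadd (vscale 1 (F_s gamma xi s u))
          (vscale (- dot (vderive gamma s) (xi s)) (F_u gamma xi s u)) = vec0).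
Proof.
  intros Hl Hg Hx Hp Ha Hgn Hxn Hind Hdet.
  pose proof (fun s u => alg (vderive gamma s) (xi s) (vderive xi s) u
     (dot1 _ (Hgn s)) (dot1 _ (Hxn s)) (orth xi s Hx Hxn) (Hdet s) (Hind s)) as A.
  assert (SP : forall s u, singular_point gamma xi s u <->
     ~ lin_indep2 (vadd (vderive gamma s) (vscale u (vderive xi s))) (xi s)).
  { intros s u. unfold singular_point. rewrite Fs_eq, Fu_eq; auto. tauto. }
  split; [|split].
  - intros s u Hs E. injection E as _ e2. rewrite lam_der in e2; auto.
    destruct (A s u) as [Hpos [_ H3]]. apply SP in Hs.
    destruct (H3 Hs) as [_ Hne]. apply Hne.
    apply Rmult_integral in e2. destruct e2 as [e|e]; auto.
    exfalso. apply (Rinv_neq_0_compat _ (Rgt_not_eq _ _ Hpos)). exact e.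
  - intros s u. rewrite SP. destruct (A s u) as [_ [H2 _]]. exact H2.
  - intros s u Hs. split.
    + intro E; injection E as e. lra.
    + rewrite Fs_eq, Fu_eq; auto. apply SP in Hs. destruct (A s u) as [_ [_ H3]].
      apply H3; auto.
Qed.
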